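(* Suppose that $$\|\theta^*\|\,\mathbb{E}_{x\sim Q}\Big[\sup_{\delta\in\mathbb{R}^D:\|\delta\|\le\|\theta^*\|}\|\nabla_\theta r(x;\theta^*+\delta)\|\Big]\le c,\qquad 0<c<1.$$ Then $\mathbb{E}_{x\sim Q}\big[\inf_{\delta\in\mathbb{R}^D:\|\delta\|\le\|\theta^*\|}r(x;\theta^*+\delta)\big]\ge 1-c$.
   Context: $Q$ is a distribution on $\mathbb{R}^m$ with density $q$; $f:\mathbb{R}^m\to\mathbb{R}^D$ is a feature map; the density ratio model is $r(x;\theta)=\exp(\theta^\top f(x))/N(\theta)$ with $N(\theta)=\mathbb{E}_{x\sim Q}[\exp(\theta^\top f(x))]$; $\theta^*\in\mathbb{R}^D$ is fixed; $\|\cdot\|$ is the Euclidean norm and $\nabla_\theta r$ the gradient in $\theta$. *)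

(* Defs.v *)
From HB Require Import structures.
From mathcomp Require Import all_boot all_order all_algebra.
From mathcomp Require Import all_classical all_reals all_analysis measurable_realfun.
Set Implicit Arguments. Unset Strict Implicit. Unset Printing Implicit Defensive.
Import Order.TTheory GRing.Theory Num.Theory.
Import numFieldNormedType.Exports.
Local Open Scope classical_set_scope.
Local Open Scope ring_scope.

Definition dotv (R : realType) (D : nat) (a b : 'rV[R]_D) : R :=
  \sum_(i < D) a 0 i * b 0 i.

Definition enorm (R : realType) (D : nat) (v : 'rV[R]_D) : R :=
  Num.sqrt (dotv v v).

Definition Nconst (R : realType) (d : measure_display) (X : measurableType d)
  (Q : probability X R) (D : nat) (f : X -> 'rV[R]_D) (theta : 'rV[R]_D) : \bar R :=
  (\int[Q]_x (expR (dotv theta (f x)))%:E)%E.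

Definition dratio (R : realType) (d : measure_display) (X : measurableType d)
  (Q : probability X R) (D : nat) (f : X -> 'rV[R]_D) (x : X) (theta : 'rV[R]_D) : R :=
  expR (dotv theta (f x)) / fine (Nconst Q f theta).

Definition grad (R : realType) (D : nat) (g : 'rV[R]_D -> R) (theta : 'rV[R]_D)
  : 'rV[R]_D :=
  \row_(i < D) ('D_(delta_mx 0 i) g theta).

Definition eball (R : realType) (D : nat) (rho : R) : set 'rV[R]_D :=
  [set delta | enorm delta <= rho].

(* Main.v *)
Require Import Defs.
From HB Require Import structures.
From mathcomp Require Import all_boot all_order all_algebra.
From mathcomp Require Import all_classical all_reals all_analysis measurable_realfun.
From mathcomp Require Import ring lra.
Import Order.TTheory GRing.Theory Num.Theory.
Import numFieldNormedType.Exports.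
Local Open Scope classical_set_scope.
Local Open Scope ring_scope.

Section Aux.
Variables (R : realType) (D : nat).
Implicit Types (a b v : 'rV[R]_D).

Lemma dotv_ge0 a : 0 <= dotv a a.
Proof. by apply: sumr_ge0 => i _; rewrite -expr2 sqr_ge0. Qed.

Lemma dotv_quad a b x y :
  \sum_(i < D) (x * a 0 i - y * b 0 i) ^+ 2 =
  x ^+ 2 * dotv a a - 2 * x * y * dotv a b + y ^+ 2 * dotv b b.
Proof.
rewrite /dotv !mulr_sumr -sumrB -big_split /=.
by apply: eq_bigr => i _; ring.
Qed.

Lemma CS a b : dotv a b ^+ 2 <= dotv a a * dotv b b.
Proof.
set A := dotv a a; set B := dotv b b; set C := dotv a b.
have key x y : 0 <= x ^+ 2 * A - 2 * x * y * C + y ^+ 2 * B.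
  by rewrite -dotv_quad; apply: sumr_ge0 => i _; exact: sqr_ge0.
have [B0|B0] := eqVneq B 0.
  have bi : forall i, b 0 i = 0.
    move=> i; apply/eqP; rewrite -sqrf_eq0; apply/eqP.
    move/eqP: B0; rewrite /B /dotv psumr_eq0; last by move=> j _; rewrite -expr2 sqr_ge0.
    by move/allP => /(_ i (mem_index_enum _)) /= /eqP; rewrite expr2.
  have -> : C = 0 by rewrite /C /dotv big1 // => i _; rewrite bi mulr0.
  by rewrite B0 expr0n /= mulr0.
have Bp : 0 < B by rewrite lt0r B0 dotv_ge0.
have := key B C; nra.
Qed.

Lemma enorm_ge0 v : 0 <= enorm v.
Proof. exact: sqrtr_ge0. Qed.

Lemma dotv_abs a b : `|dotv a b| <= enorm a * enorm b.
Proof.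
rewrite /enorm -sqrtrM ?dotv_ge0 // -sqrtr_sqr.
by apply: ler_wsqrtr; exact: CS.
Qed.

Lemma enormZ t v : enorm (t *: v) = `|t| * enorm v.
Proof.
rewrite /enorm -sqrtr_sqr -sqrtrM ?sqr_ge0 //; congr Num.sqrt.
rewrite /dotv mulr_sumr; apply: eq_bigr => i _; rewrite !mxE; ring.
Qed.

Lemma enorm0 : enorm (0 : 'rV[R]_D) = 0.
Proof. by rewrite /enorm /dotv big1 ?sqrtr0 // => i _; rewrite mxE mul0r. Qed.

Lemma deriv_dot (g : 'rV[R]_D -> R) p v : differentiable g p ->
  'D_v g p = dotv v (grad g p).
Proof.
move=> dg; rewrite deriveE // {1}(row_sum_delta v) linear_sum /dotv.
apply: eq_bigr => i _; rewrite linearZ /= mxE deriveE //.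
Qed.

End Aux.
Lemma mvt_bound (R : realType) (D : nat) (g : 'rV[R]_D -> R) (a dl : 'rV[R]_D) :
  (forall t : R, 0 <= t <= 1 -> differentiable g (a + t *: dl)) ->
  exists2 t : R, 0 <= t <= 1 &
    g a - enorm dl * enorm (grad g (a + t *: dl)) <= g (a + dl).
Proof.
move=> Hd.
pose h (t : R) := g (a + t *: dl).
have Hq t : (fun s : R => s^-1 *: ((h \o shift t) (s *: 1) - h t)) =
   (fun s : R => s^-1 *: ((g \o shift (a + t *: dl)) (s *: dl) - g (a + t *: dl))).
  apply: funext => s /=; rewrite /h /shift /=.
  congr (_ *: (g _ - _)).
  by rewrite [s *: 1]mulr1 scalerDl addrCA addrC.
have Hder t : 0 <= t <= 1 -> derivable h t 1 /\ 'D_1 h t = 'D_dl g (a + t *: dl).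
  move=> t01; rewrite /derivable /derive Hq; split => //.
  exact: diff_derivable (Hd _ t01).
have [c c01 Hc] : exists2 c, c \in `]0, 1[ & h 1 - h 0 = 'D_1 h c * (1 - 0).
  apply: MVT => //.
    move=> x; rewrite in_itv /= => /andP[x0 x1].
    apply: derivableP; apply: (Hder x _).1.
    by rewrite !ltW.
  apply: continuous_in_subspaceT => x; rewrite inE /= in_itv /= => x01.
  apply: differentiable_continuous; apply/derivable1_diffP.
  exact: (Hder x x01).1.
move: c01; rewrite in_itv /= => /andP[c0 c1].
have c01 : 0 <= c <= 1 by rewrite !ltW.
exists c => //.
move: Hc; rewrite (Hder c c01).2 deriv_dot; last exact: Hd.
rewrite /h scale1r scale0r addr0 => Hc.
have := @dotv_abs _ _ dl (grad g (a + c *: dl)).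
rewrite ler_norml => /andP[H1 H2].
lra.
Qed.
Theorem proposition8 (R : realType) (d : measure_display) (X : measurableType d)
  (Q : probability X R) (D : nat) (f : X -> 'rV[R]_D) (theta_star : 'rV[R]_D)
  (c : R) :
  (forall i : 'I_D, measurable_fun setT (fun x => f x 0 i)) ->
  (forall theta : 'rV[R]_D,
      Q.-integrable setT (fun x => (expR (dotv theta (f x)))%:E)) ->
  (forall (x : X) (delta : 'rV[R]_D), delta \in eball (enorm theta_star) ->
      differentiable (dratio Q f x) (theta_star + delta)) ->
  let S : X -> \bar R := fun x : X => ereal_sup
      ((fun delta => (enorm (grad (dratio Q f x) (theta_star + delta)))%:E)
         @` eball (enorm theta_star)) in
  let I : X -> \bar R := fun x : X => ereal_inf
      ((fun delta => (dratio Q f x (theta_star + delta))%:E)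
         @` eball (enorm theta_star)) in
  measurable_fun setT S ->
  measurable_fun setT I ->
  0 < c -> c < 1 ->
  ((enorm theta_star)%:E * \int[Q]_x S x <= c%:E)%E ->
  ((1 - c)%:E <= \int[Q]_x I x)%E.
Proof.
move=> mf Hint Hdiff S I mS mI c0 c1 Hc.
set k := enorm theta_star.
have k0 : 0 <= k by exact: enorm_ge0.
have Nge0 th : (0 <= Nconst Q f th)%E.
  by apply: integral_ge0 => x _; rewrite lee_fin expR_ge0.
set Nc := Nconst Q f theta_star.
have Ncfin : Nc \is a fin_num := integrable_fin_num measurableT (Hint theta_star).
have mexp : measurable_fun setT (fun x => (expR (dotv theta_star (f x)))%:E).
  exact: measurable_int (Hint theta_star).
have Nc0 : Nc != 0%E.
  apply/negP => /eqP N0.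
  have : (\int[Q]_x `|(expR (dotv theta_star (f x)))%:E| = 0)%E.
    rewrite -N0 /Nc /Nconst; apply: eq_integral => x _.
    by rewrite gee0_abs // lee_fin expR_ge0.
  move/(ae_eq_integral_abs _ measurableT mexp) => [A [mA A0 sub]].
  have AT : A = setT.
    apply/seteqP; split => // x _; apply: sub => /= H.
    have HE := EFin_inj (H Logic.I); have := expR_gt0 (dotv theta_star (f x)); by rewrite HE ltxx.
  have := probability_setT Q; rewrite -AT. rewrite A0 => /eqP; by rewrite eq_sym onee_eq0.
have Ncpos : 0 < fine Nc.
  rewrite lt0r; apply/andP; split; last exact: fine_ge0 (Nge0 _).
  apply: contra Nc0 => /eqP H.
  by rewrite -(fineK Ncfin) H.
have r_ge0 x th : 0 <= dratio Q f x th.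
  by rewrite /dratio divr_ge0 ?expR_ge0 // fine_ge0 // Nge0.
pose r x := dratio Q f x theta_star.
have rE x : ((r x)%:E = (expR (dotv theta_star (f x)))%:E * ((fine Nc)^-1)%:E)%E.
  by rewrite -EFinM.
have Hr1 : (\int[Q]_x (r x)%:E = 1)%E.
  under eq_integral do rewrite rE.
  rewrite integralZr //.
  have -> : (\int[Q]_x (expR (dotv theta_star (f x)))%:E)%E = Nc by [].
  by rewrite -(fineK Ncfin) -EFinM fineK // mulfV // gt_eqF.
have mr : measurable_fun setT (fun x => (r x)%:E).
  have -> : (fun x => (r x)%:E) =
     (fun x => (expR (dotv theta_star (f x)))%:E * ((fine Nc)^-1)%:E)%E.
    by apply: funext => x; rewrite rE.
  by apply: emeasurable_funM => //; exact: measurable_cst.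
have inball (t : R) (dl : 'rV[R]_D) : 0 <= t <= 1 -> eball k dl -> eball k (t *: dl).
  rewrite /eball /= enormZ => /andP[t0 t1] Hdl.
  have := @enorm_ge0 _ _ dl; rewrite ger0_norm //; nra.
have S_ge0 x : (0 <= S x)%E.
  apply: (@le_trans _ _ (enorm (grad (dratio Q f x) (theta_star + 0)))%:E).
    by rewrite lee_fin enorm_ge0.
  apply: ereal_sup_ubound; exists 0 => //.
  by rewrite /eball /= (@enorm0 R D).
have I_ge0 x : (0 <= I x)%E.
  by apply: le_ereal_inf_tmp => y [dl _ <-]; rewrite lee_fin.
have Hpt x : ((r x)%:E <= I x + k%:E * S x)%E.
  have elem dl : eball k dl ->
      ((r x)%:E <= (dratio Q f x (theta_star + dl))%:E + k%:E * S x)%E.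
    move=> Hdl.
    have [t t01 Ht] := @mvt_bound R D (dratio Q f x) theta_star dl
      (fun t t01 => Hdiff x _ (mem_set (inball t dl t01 Hdl))).
    set G := enorm (grad (dratio Q f x) (theta_star + t *: dl)) in Ht.
    have GS : ((G%:E) <= S x)%E.
      by apply: ereal_sup_ubound; exists (t *: dl) => //; exact: inball.
    have kG : enorm dl * G <= k * G.
      by apply: ler_wpM2r; [exact: enorm_ge0|].
    apply: (@le_trans _ _ ((dratio Q f x (theta_star + dl))%:E + (k * G)%:E)%E).
      rewrite -EFinD lee_fin /r; lra.
    by rewrite leeD2l // EFinM; apply: lee_wpmul2l => //; rewrite lee_fin.
  have [kSoo|kSfin] := eqVneq (k%:E * S x)%E +oo%E.
    rewrite kSoo addey ?leey //.
    by have := I_ge0 x; case: (I x).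
  have kSge0 : (0 <= k%:E * S x)%E by apply: mule_ge0; rewrite ?lee_fin.
  have kSf : (k%:E * S x)%E \is a fin_num by rewrite ge0_fin_numE // ltey.
  have HI : ((r x - fine (k%:E * S x))%:E <= I x)%E.
    apply: le_ereal_inf_tmp => y [dl Hdl <-].
    have := elem dl Hdl; rewrite -(fineK kSf) -EFinD !lee_fin; lra.
  rewrite -(fineK kSf).
  have -> : (r x)%:E = ((r x - fine (k%:E * S x))%:E + (fine (k%:E * S x))%:E)%E.
    by rewrite -EFinD subrK.
  exact: leeD.
have mkS : measurable_fun setT (fun x => k%:E * S x)%E by exact: measurable_funeM.
have H1 : (1 <= \int[Q]_x I x + k%:E * \int[Q]_x S x)%E.
  rewrite -ge0_integralZl //.
  rewrite -ge0_integralD //; last first.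
    by move=> x _; apply: mule_ge0; rewrite ?lee_fin.
  rewrite -Hr1; apply: ge0_le_integral => //.
    by move=> x _; rewrite lee_fin r_ge0.
  exact: emeasurable_funD.
have a0 : (0 <= \int[Q]_x I x)%E by apply: integral_ge0 => x _.
have b0 : (0 <= k%:E * \int[Q]_x S x)%E.
  by apply: mule_ge0; [rewrite lee_fin | apply: integral_ge0 => x _].
move: H1 Hc a0 b0.
rewrite -/k.
move: (\int[Q]_x I x)%E (k%:E * \int[Q]_x S x)%E => a b.
case: a => [a| |]; case: b => [b| |] //=; rewrite ?lee_fin ?leey //.
- move=> H1 H2 H3 H4; lra.
Qed.
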